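(* Consider the fidelity estimation problem with a single observable $O=|\psi\rangle\langle\psi|$ for a pure state $|\psi\rangle\in\mathbb{C}^d$, and unknown state $\rho=\mathbb{I}_d/d$. Let $K$ be the batch size of the median-of-means classical shadows estimator. For $n$ sufficiently large, $\gamma\ge 1/K$, and $d\ge 1000$, there exists an adversary that corrupts an $O(\gamma)$ fraction of the outcome vectors $|v_1\rangle,\ldots,|v_n\rangle$ and causes an error of at least $\Omega(\gamma d)$ for the median-of-means estimator.
   Context: Uniform POVM / classical shadows: each of $n$ copies of $\rho\in\mathbb{C}^{d\times d}$ is measured with the uniform POVM $\{d|v\rangle\langle v|\,\mathrm{d}v\}$ over unit vectors $|v\rangle\in\mathbb{C}^d$ ($\mathrm{d}v$ the unitarily invariant (Haar) probability measure on the complex unit sphere), so the outcome $|v\rangle$ has density $d\langle v|\rho|v\rangle$ with respect to $\mathrm{d}v$; this gives outcomes $|v_1\rangle,\ldots,|v_n\rangle$. Since $\operatorname{Tr}[O\rho]=(d+1)\mathbb{E}[\langle v|O|v\rangle]-\operatorname{Tr}[O]$, the median-of-means estimator with batch size $K$ divides the $n$ outcomes into $n/K$ batches of $K$ outcomes each, computes in each batch the empirical mean of $(d+1)\langle v_j|O|v_j\rangle-\operatorname{Tr}[O]$, and outputs the median of these batch means. The adversary may replace outcome vectors $|v_j\rangle$ by arbitrary unit vectors. *)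

(* Defs.v *)
From HB Require Import structures.
From mathcomp Require Import all_boot all_order all_algebra.
From mathcomp Require Import complex.
From mathcomp Require Import all_classical all_reals all_analysis.

Set Implicit Arguments.
Unset Strict Implicit.
Unset Printing Implicit Defensive.

Import Order.TTheory GRing.Theory Num.Theory.
Local Open Scope ring_scope.
Local Open Scope classical_set_scope.

(* Vectors of C^d, with the Borel (product) sigma-algebra generated by  *)
(* the 2d real coordinates (real and imaginary parts).                  *)

Definition cvec (R : realType) (d : nat) : Type := 'cV[R[i]]_d.

HB.instance Definition _ (R : realType) d :=
  Choice.copy (cvec R d) 'cV[R[i]]_d.
HB.instance Definition _ (R : realType) d :=
  isPointed.Build (cvec R d) (0 : 'cV[R[i]]_d).

Definition cvec_coord (R : realType) d (i : 'I_(d + d)) (v : cvec R d) : R :=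
  match fintype.split i with
  | inl j => complex.Re (v j 0)
  | inr j => complex.Im (v j 0)
  end.

Section cvec_measurable.
Variables (R : realType) (d : nat).

Let cvec_set0 : g_sigma_preimage (@cvec_coord R d) set0.
Proof. exact: sigma_algebra0. Qed.

Let cvec_setC A : g_sigma_preimage (@cvec_coord R d) A ->
  g_sigma_preimage (@cvec_coord R d) (~` A).
Proof. exact: sigma_algebraC. Qed.

Let cvec_bigcup (F : (set (cvec R d))^nat) :
  (forall i, g_sigma_preimage (@cvec_coord R d) (F i)) ->
  g_sigma_preimage (@cvec_coord R d) (\bigcup_i (F i)).
Proof. exact: sigma_algebra_bigcup. Qed.

HB.instance Definition _ := @isMeasurable.Build default_measure_display
  (cvec R d) (g_sigma_preimage (@cvec_coord R d)) cvec_set0 cvec_setC cvec_bigcup.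

End cvec_measurable.

Definition dagger (R : realType) m n (A : 'M[R[i]]_(m, n)) : 'M[R[i]]_(n, m) :=
  (map_mx (fun z : R[i] => z^*) A)^T.

Definition braket (R : realType) d (u v : 'cV[R[i]]_d) : R[i] :=
  (dagger u *m v) 0 0.

Definition unit_vector (R : realType) d (v : 'cV[R[i]]_d) : Prop :=
  braket v v = 1.

Definition unitary (R : realType) d (U : 'M[R[i]]_d) : Prop :=
  dagger U *m U = 1%:M.

Definition qform (R : realType) d (O : 'M[R[i]]_d) (v : 'cV[R[i]]_d) : R[i] :=
  (dagger v *m O *m v) 0 0.

Definition proj1 (R : realType) d (psi : 'cV[R[i]]_d) : 'M[R[i]]_d :=
  psi *m dagger psi.

Definition maximally_mixed (R : realType) d : 'M[R[i]]_d := (d%:R^-1) %:M.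

Definition haar_sphere (R : realType) d
    (mu : probability (cvec R d) R) : Prop :=
  mu [set v : cvec R d | unit_vector v] = 1%E /\
  forall (U : 'M[R[i]]_d), unitary U ->
    forall A : set (cvec R d), measurable A ->
      mu ((fun v : cvec R d => (U *m v : cvec R d)) @^-1` A) = mu A.

(* outcome distribution of the uniform POVM {d |v><v| dv} on rho:       *)
(* density d <v|rho|v> with respect to dv                               *)
Definition povm_outcome_law (R : realType) d
    (mu : probability (cvec R d) R) (rho : 'M[R[i]]_d) (A : set (cvec R d))
    : \bar R :=
  (\int[mu]_(v in A) (d%:R * complex.Re (qform rho v))%:E)%E.

Definition iid_outcomes (R : realType) d dO (Omega : measurableType dO)
    (P : probability Omega R) (n : nat) (V : nat -> Omega -> cvec R d)
    (law : set (cvec R d) -> \bar R) : Prop :=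
  (forall j, (j < n)%N -> measurable_fun setT (V j)) /\
  forall A : nat -> set (cvec R d), (forall j, (j < n)%N -> measurable (A j)) ->
    P (\bigcap_(j in `I_n) (V j @^-1` A j)) = (\prod_(j < n) law (A j))%E.

(* lower median (median of an odd-length list is its middle element)   *)
Definition median (R : realType) (s : seq R) : R :=
  nth 0 (sort <=%R s) ((size s).-1 %/ 2).

(* single-shot estimate (d+1)<v|O|v> - Tr[O]  (real for Hermitian O)    *)
Definition shadow_value (R : realType) d (O : 'M[R[i]]_d) (v : 'cV[R[i]]_d) : R :=
  complex.Re ((d.+1)%:R * qform O v - \tr O).

(* outcomes w 0, ..., w (m*K - 1); batch b consists of w (b*K + k),     *)
Definition median_of_means (R : realType) d (O : 'M[R[i]]_d) (K m : nat)
    (w : nat -> cvec R d) : R :=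
  median [seq K%:R^-1 * \sum_(k < K) shadow_value O (w (b * K + k)%N)
         | b <- iota 0 m].

Definition num_corrupted (R : realType) d (n : nat) (w w' : nat -> cvec R d) : nat :=
  count (fun j => w' j != w j) (iota 0 n).

Definition adversary (R : realType) d (n : nat) (budget : R)
    (Adv : (nat -> cvec R d) -> (nat -> cvec R d)) : Prop :=
  forall w, (num_corrupted n w (Adv w))%:R <= budget /\
    forall j, (j < n)%N -> Adv w j != w j -> unit_vector (Adv w j).

(* Main.v *)
Require Import Defs.
From HB Require Import structures.
From mathcomp Require Import all_boot all_order all_algebra.
From mathcomp Require Import complex.
From mathcomp Require Import all_classical all_reals all_analysis.
From mathcomp Require Import ring lra.
Import Order.TTheory GRing.Theory Num.Theory.
Local Open Scope ring_scope.
Local Open Scope classical_set_scope.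
Lemma Re_nat (R : realType) n : complex.Re (n%:R : R[i]) = n%:R.
Proof. by rewrite -(rmorph_nat (@real_complex R)). Qed.
Lemma ReB (R : realType) (x y : R[i]) : complex.Re (x - y) = complex.Re x - complex.Re y.
Proof. by case: x; case: y. Qed.
Lemma ReD (R : realType) (x y : R[i]) : complex.Re (x + y) = complex.Re x + complex.Re y.
Proof. by case: x; case: y. Qed.
Lemma ReMn (R : realType) n (z : R[i]) : complex.Re (n%:R * z) = n%:R * complex.Re z.
Proof. rewrite -(rmorph_nat (@real_complex R)); case: z => a b /=. by rewrite mul0r subr0. Qed.
Lemma Re_sum (R : realType) d (F : 'I_d -> R[i]) : complex.Re (\sum_j F j) = \sum_j complex.Re (F j).
Proof. exact: (big_morph (@complex.Re R) (@ReD R) (erefl _)). Qed.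
Lemma Re_normsq (R : realType) (z : R[i]) : 0 <= complex.Re (z^*%C * z).
Proof. case: z => a b /=. by rewrite mulNr opprK addr_ge0 // -expr2 sqr_ge0. Qed.

Lemma braketE (R : realType) d (u v : 'cV[R[i]]_d) :
  braket u v = \sum_j (u j 0)^*%C * v j 0.
Proof. by rewrite /braket /dagger mxE; apply: eq_bigr => j _; rewrite !mxE. Qed.

Lemma qform_proj (R : realType) d (psi v : 'cV[R[i]]_d) :
  qform (proj1 psi) v = braket v psi * braket psi v.
Proof.
by rewrite /qform /proj1 mulmxA -mulmxA [_ 0 0]mxE big_ord1.
Qed.

Lemma tr_proj (R : realType) d (psi : 'cV[R[i]]_d) :
  \tr (proj1 psi) = braket psi psi.
Proof. by rewrite /proj1 mxtrace_mulC /braket /mxtrace big_ord1. Qed.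

Lemma sv_psi (R : realType) d (psi : 'cV[R[i]]_d) :
  unit_vector psi -> shadow_value (proj1 psi) psi = d%:R.
Proof.
move=> u; rewrite /shadow_value qform_proj tr_proj u mulr1 mulr1.
by rewrite -addn1 natrD addrK Re_nat.
Qed.

Lemma braket_e_l (R : realType) d (i : 'I_d) (v : 'cV[R[i]]_d) :
  braket (delta_mx i 0) v = v i 0.
Proof.
rewrite braketE (bigD1 i) //= big1 ?addr0.
  by rewrite !mxE !eqxx /= oppr0 mul1r.
by move=> j /negbTE ji; rewrite !mxE ji /= oppr0 mul0r.
Qed.

Lemma braket_e_r (R : realType) d (i : 'I_d) (v : 'cV[R[i]]_d) :
  braket v (delta_mx i 0) = (v i 0)^*%C.
Proof.
rewrite braketE (bigD1 i) //= big1 ?addr0.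
  by rewrite !mxE !eqxx /= mulr1.
by move=> j /negbTE ji; rewrite !mxE ji /= mulr0.
Qed.

Lemma unit_e (R : realType) d (i : 'I_d) : unit_vector (delta_mx i 0 : 'cV[R[i]]_d).
Proof. by rewrite /unit_vector braket_e_l mxE !eqxx. Qed.

Lemma exists_small (R : realType) d (psi : 'cV[R[i]]_d) : (0 < d)%N ->
  unit_vector psi -> exists i : 'I_d,
    shadow_value (proj1 psi) (delta_mx i 0) <= d%:R^-1.
Proof.
move=> d0 u.
pose q j := complex.Re ((psi j 0)^*%C * psi j 0).
have sq : \sum_j q j = 1.
  by rewrite /q -Re_sum -braketE u.
have [i hi] : exists i, q i <= d%:R^-1.
  apply/not_existsP => /= H.
  have : \sum_(j < d) d%:R^-1 < \sum_j q j :> R.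
    apply: ltr_sum; first by apply/hasP; exists (Ordinal d0); rewrite ?mem_index_enum.
    by move=> j _; rewrite ltNge; apply/negP => /(H j).
  rewrite sumr_const card_ord sq -(mulr_natr (d%:R^-1)) mulVf ?ltxx //.
  by rewrite pnatr_eq0 -lt0n.
exists i.
rewrite /shadow_value qform_proj tr_proj u braket_e_l braket_e_r ReB ReMn.
have -> : complex.Re (psi i 0 * (psi i 0)^*%C) = q i by rewrite /q mulrC.
have dp : 0 < d%:R :> R by rewrite ltr0n.
rewrite (@le_trans _ _ ((d.+1)%:R * d%:R^-1 - 1)) //.
  by rewrite lerD2r ler_wpM2l.
rewrite -addn1 natrD mulrDl mulfV ?gt_eqF // mul1r. by rewrite [1 + _]addrC addrK.
Qed.

Lemma median_shift (R : realType) (s : seq R) L : (0 < size s)%N ->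
  median [seq x + L | x <- s] = median s + L.
Proof.
move=> s0; rewrite /median size_map sort_map.
have -> : relpre (fun x => x + L) <=%R = <=%R :> rel R.
  by apply/funext=> x; apply/funext=> y; rewrite /relpre /= lerD2r.
rewrite (nth_map 0) // size_sort.
apply: (leq_ltn_trans (leq_div _ _)).
by rewrite prednK.
Qed.

Lemma count_blocks (K k m : nat) : (k <= K)%N ->
  (count (fun j => j %% K < k) (iota 0 (m * K)) <= m * k)%N.
Proof.
move=> kK; elim: m => [|m IH]; first by rewrite mul0n.
rewrite mulSnr iotaD count_cat add0n mulSnr leq_add //.
have -> : iota (m * K) K = iota (m * K + 0) K by rewrite addn0.
rewrite iotaDl count_map.
have -> : count (preim (addn (m * K)) (fun j => (j %% K < k)%N)) (iota 0 K) =
          count (fun j => (j < k)%N) (iota 0 K).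
  apply: eq_in_count => j; rewrite mem_iota add0n => jK /=.
  by rewrite modnMDl modn_small.
rewrite -size_filter -(size_iota 0 k); apply: uniq_leq_size.
  by rewrite filter_uniq // iota_uniq.
by move=> j; rewrite mem_filter !mem_iota /= !add0n size_iota; case/andP.
Qed.

Definition advT (R : realType) d (K k : nat) (t : cvec R d) (w : nat -> cvec R d) :=
  fun j => if (j %% K < k)%N then t else w j.
Arguments advT {R d}.

Lemma mom_shift (R : realType) d (O : 'M[R[i]]_d) (K k m : nat) (a b : cvec R d)
  (w : nat -> cvec R d) : (0 < m)%N -> (k <= K)%N ->
  median_of_means O K m (advT K k a w) =
  median_of_means O K m (advT K k b w) +
    K%:R^-1 * ((shadow_value O a - shadow_value O b) *+ k).
Proof.
move=> m0 kK; rewrite /median_of_means -median_shift ?size_map ?size_iota //.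
congr median; rewrite -map_comp; apply: eq_map => c /=.
rewrite -mulrDr; congr (_ * _).
have -> : \sum_(i < K) shadow_value O (advT K k a w (c * K + i)) =
   \sum_(i < K) (shadow_value O (advT K k b w (c * K + i)) +
                 (if (i < k)%N then shadow_value O a - shadow_value O b else 0)).
  apply: eq_bigr => i _; rewrite /advT modnMDl modn_small //.
  by case: ifP => _; rewrite ?addr0 // addrC subrK.
rewrite big_split /=; congr (_ + _).
by rewrite -big_mkcond -(big_ord_widen _ (fun _ => shadow_value O a - shadow_value O b) kK) sumr_const card_ord.
Qed.

Theorem theorem4 (R : realType) :
  exists C c : R, 0 < C /\ 0 < c /\
  forall (d : nat), (1000 <= d)%N ->
  forall (K : nat), (0 < K)%N ->
  forall (gamma : R), K%:R^-1 <= gamma -> gamma <= 1 ->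
  forall (psi : 'cV[R[i]]_d), unit_vector psi ->
  forall (delta : R), 0 < delta ->
  exists N : nat, forall m : nat, (N <= m * K)%N ->
  forall (dO : measure_display) (Omega : measurableType dO)
         (P : probability Omega R) (mu : probability (cvec R d) R)
         (V : nat -> Omega -> cvec R d),
    haar_sphere mu ->
    iid_outcomes P (m * K) V (povm_outcome_law mu (maximally_mixed R d)) ->
    exists Adv : (nat -> cvec R d) -> (nat -> cvec R d),
      adversary (m * K) (C * gamma * (m * K)%:R) Adv /\
      exists F : set Omega, measurable F /\ ((1 - delta)%:E <= P F)%E /\
        forall omega, F omega ->
          c * gamma * d%:R <=
          `| median_of_means (proj1 psi) K m (Adv (fun j => V j omega))
             - complex.Re (\tr (proj1 psi *m maximally_mixed R d)) |.
Proof.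
exists 1, 8^-1; split; first exact: ltr01.
split; first by rewrite invr_gt0 ltr0n.
move=> d d1000 K K0 gamma hgK hg1 psi u delta hdelta.
exists 1%N => m hm dO Omega P mu V _ _.
have m0 : (0 < m)%N by case: m hm => //; rewrite mul0n.
have Kr : 0 < K%:R :> R by rewrite ltr0n.
have dr : 1000 <= d%:R :> R by rewrite (ler_nat R 1000 d).
have d0 : (0 < d)%N by apply: leq_trans d1000.
have gK1 : 1 <= gamma * K%:R.
  by rewrite -(ler_pdivrMr _ _ Kr) mul1r.
have g0 : 0 <= gamma * K%:R by apply: le_trans gK1; exact: ler01.
pose k := Num.trunc (gamma * K%:R).
have /andP[kle klt] := truncn_itv g0.
rewrite -/k in kle klt.
have kK : (k <= K)%N.
  rewrite -(ler_nat R); apply: (le_trans kle).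
  by rewrite -[X in _ <= X]mul1r ler_wpM2r // ltW.
have k1 : 1 <= k%:R :> R.
  by rewrite (ler_nat R 1 k) /k (truncn_ge_nat 1 g0).
have [i hi] := exists_small R d psi d0 u.
set a : cvec R d := psi.
set b : cvec R d := delta_mx i 0.
set t := complex.Re _.
pose MA w := median_of_means (proj1 psi) K m (advT K k a w).
pose MB w := median_of_means (proj1 psi) K m (advT K k b w).
pose Adv w := if `|MB w - t| <= `|MA w - t| then advT K k a w else advT K k b w.
exists Adv; split.
  move=> w; split.
    apply: (@le_trans _ _ (m * k)%:R).
      rewrite ler_nat; rewrite /num_corrupted; apply: leq_trans (@count_blocks K k m kK).
      apply: sub_count => j /=; rewrite /Adv /advT.
      by case: ifP => _; case: ifP => //; rewrite eqxx.
    rewrite mul1r natrM natrM mulrCA ler_wpM2l ?ler0n //.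
  move=> j _; rewrite /Adv /advT.
  case: ifP => _; case: ifP => _; rewrite ?eqxx // => _.
  by rewrite /b /unit_vector braket_e_l mxE !eqxx.
exists setT; split; first exact: measurableT.
split; first by rewrite probability_setT lee_fin gerDl oppr_le0 ltW.
move=> omega _.
set w := fun j => V j omega.
pose L := K%:R^-1 * ((shadow_value (proj1 psi) a - shadow_value (proj1 psi) b) *+ k).
have hAB : MA w = MB w + L by exact: (@mom_shift R d (proj1 psi) K k m a b w m0 kK).
have svA : shadow_value (proj1 psi) a = d%:R by rewrite sv_psi.
have hL : 4^-1 * (gamma * d%:R) <= L.
  rewrite /L svA.
  set s := shadow_value _ b.
  rewrite -(mulr_natr (d%:R - s)).
  have hinv : d%:R^-1 <= 1 :> R by rewrite invf_le1 ?ltr0n // (ler_nat R 1 d).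
  have hD : d%:R / 2 <= d%:R - s by lra.
  have klt' : gamma * K%:R < k%:R + 1 by rewrite natr1.
  have hk : gamma * K%:R / 2 <= k%:R by lra.
  have h1 : d%:R / 2 * (gamma * K%:R / 2) <= (d%:R - s) * k%:R.
    by apply: ler_pM => //; lra.
  have Kn : K%:R != 0 :> R by rewrite gt_eqF.
  have -> : 4^-1 * (gamma * d%:R) = K%:R^-1 * (d%:R / 2 * (gamma * K%:R / 2)).
    by field.
  by rewrite ler_wpM2l // invr_ge0 ltW.
have tri : L <= `|MA w - t| + `|MB w - t|.
  apply: (le_trans (ler_norm L)).
  have -> : L = (MA w - t) - (MB w - t) by rewrite hAB; ring.
  exact: ler_normB.
have -> : median_of_means (proj1 psi) K m (Adv w) - t =
   if `|MB w - t| <= `|MA w - t| then MA w - t else MB w - t.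
  by rewrite /Adv; case: ifP.
case: ifP => h.
  lra.
have h' : `|MA w - t| < `|MB w - t| by rewrite ltNge h.
lra.
Qed.
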